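(* Let $d\ge 2$ and $2\le k\le d+1$, and let $y_1,\dots,y_N\in\{1,\dots,k\}$ be labels with every class appearing at least once. For prototypes $\boldsymbol w_1,\dots,\boldsymbol w_k\in\mathbb S^{d-1}$ and features $\boldsymbol z_1,\dots,\boldsymbol z_N\in\mathbb S^{d-1}$, define $$\gamma_{\min}=\min_{1\le i\le N}\Big(\boldsymbol w_{y_i}^{\mathrm T}\boldsymbol z_i-\max_{j\ne y_i}\boldsymbol w_j^{\mathrm T}\boldsymbol z_i\Big).$$ Then the maximum of $\gamma_{\min}$ over all such configurations is $\frac{k}{k-1}$, and it is attained if and only if $\boldsymbol w_i^{\mathrm T}\boldsymbol w_j=-\frac{1}{k-1}$ for all $i\ne j$ and $\boldsymbol z_i=\boldsymbol w_{y_i}$ for all $i$.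
   Context: $\mathbb S^{d-1}$ is the unit sphere in $\mathbb R^d$. Feature $\boldsymbol z_i$ is associated with label $y_i$; $\gamma_{\min}$ is the minimal sample margin over the dataset. *)

(* Defs.v *)
From HB Require Import structures.
From mathcomp Require Import all_boot all_order all_algebra.
From mathcomp Require Import reals constructive_ereal.
Set Implicit Arguments. Unset Strict Implicit. Unset Printing Implicit Defensive.
Import Order.TTheory GRing.Theory Num.Theory.
Local Open Scope ring_scope.

Definition dotv (R : realType) (d : nat) (u v : 'rV[R]_d) : R :=
  \sum_(i < d) u ord0 i * v ord0 i.

Definition on_sphere (R : realType) (d : nat) (u : 'rV[R]_d) : Prop :=
  dotv u u = 1.

Local Open Scope ereal_scope.

(* sample margin of sample i: w_{y_i}^T z_i - max_{j <> y_i} w_j^T z_i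
   (computed in the extended reals; the max is over a nonempty set when k >= 2) *)
Definition sample_margin (R : realType) (d k N : nat) (y : 'I_N -> 'I_k)
  (w : 'I_k -> 'rV[R]_d) (z : 'I_N -> 'rV[R]_d) (i : 'I_N) : \bar R :=
  (dotv (w (y i)) (z i))%:E
  - \big[Order.max/-oo]_(j < k | j != y i) (dotv (w j) (z i))%:E.

Definition gamma_min (R : realType) (d k N : nat) (y : 'I_N -> 'I_k)
  (w : 'I_k -> 'rV[R]_d) (z : 'I_N -> 'rV[R]_d) : \bar R :=
  \big[Order.min/+oo]_(i < N) sample_margin y w z i.

(* Main.v *)
Require Import Defs.
From HB Require Import structures.
From mathcomp Require Import all_boot all_order all_algebra.
From mathcomp Require Import reals constructive_ereal.
From mathcomp Require Import ring lra.
Import Order.TTheory GRing.Theory Num.Theory.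
Set Implicit Arguments. Unset Strict Implicit. Unset Printing Implicit Defensive.
Local Open Scope ring_scope.
Section Dot.
Variables (R : realType) (d : nat).
Implicit Types u v w : 'rV[R]_d.

Lemma dotvC u v : dotv u v = dotv v u.
Proof. by apply: eq_bigr => i _; rewrite mulrC. Qed.

Lemma dotvDl u v w : dotv (u + v) w = dotv u w + dotv v w.
Proof. by rewrite /dotv -big_split; apply: eq_bigr => i _; rewrite mxE mulrDl. Qed.

Lemma dotvZl a u w : dotv (a *: u) w = a * dotv u w.
Proof. by rewrite /dotv mulr_sumr; apply: eq_bigr => i _; rewrite mxE mulrA. Qed.

Lemma dotvNl u w : dotv (- u) w = - dotv u w.
Proof. by rewrite /dotv -sumrN; apply: eq_bigr => i _; rewrite mxE mulNr. Qed.

Lemma dotv0l w : dotv 0 w = 0.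
Proof. by rewrite /dotv big1 // => i _; rewrite mxE mul0r. Qed.

Lemma dotvBl u v w : dotv (u - v) w = dotv u w - dotv v w.
Proof. by rewrite dotvDl dotvNl. Qed.

Lemma dotvDr u v w : dotv w (u + v) = dotv w u + dotv w v.
Proof. by rewrite dotvC dotvDl !(dotvC w). Qed.
Lemma dotvZr a u w : dotv w (a *: u) = a * dotv w u.
Proof. by rewrite dotvC dotvZl dotvC. Qed.
Lemma dotvBr u v w : dotv w (u - v) = dotv w u - dotv w v.
Proof. by rewrite dotvC dotvBl !(dotvC w). Qed.
Lemma dotv0r w : dotv w 0 = 0.
Proof. by rewrite dotvC dotv0l. Qed.

Lemma dotv_suml (I : finType) (F : I -> 'rV[R]_d) w :
  dotv (\sum_i F i) w = \sum_i dotv (F i) w.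
Proof.
by apply: (big_morph (fun u => dotv u w)); [move=> x y; exact: dotvDl | exact: dotv0l].
Qed.
Lemma dotv_sumr (I : finType) (F : I -> 'rV[R]_d) w :
  dotv w (\sum_i F i) = \sum_i dotv w (F i).
Proof. by rewrite dotvC dotv_suml; apply: eq_bigr => i _; rewrite dotvC. Qed.

Lemma dotv_ge0 u : 0 <= dotv u u.
Proof. by apply: sumr_ge0 => i _; rewrite -expr2 sqr_ge0. Qed.

Lemma dotv_eq0 u : dotv u u = 0 -> u = 0.
Proof.
move=> H; apply/rowP => i; rewrite mxE.
have hge : forall j : 'I_d, true -> 0 <= u ord0 j * u ord0 j.
  by move=> j _; rewrite -expr2 sqr_ge0.
have := psumr_eq0P hge H (i:=i) isT.
by move/eqP; rewrite mulf_eq0 orbb => /eqP.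
Qed.

Lemma two_dot_le u v : 2 * dotv u v <= dotv u u + dotv v v.
Proof.
have := dotv_ge0 (u - v).
rewrite dotvBl !dotvBr (dotvC v u); lra.
Qed.

Lemma dist_sq u v : dotv u u = 1 -> dotv v v = 1 ->
  dotv (u - v) (u - v) = 2 - 2 * dotv u v.
Proof. move=> Hu Hv; rewrite dotvBl !dotvBr (dotvC v u) Hu Hv; lra. Qed.

End Dot.
Section Margin.
Variables (R : realType) (d k N : nat) (y : 'I_N -> 'I_k).
Variables (w : 'I_k -> 'rV[R]_d) (z : 'I_N -> 'rV[R]_d).
Hypothesis hk : (2 <= k)%N.

Lemma exists_other (c : 'I_k) : exists j : 'I_k, j != c.
Proof.
have h0 : (0 < k)%N by apply: leq_trans hk.
have h1 : (1 < k)%N by [].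
case: (eqVneq c (Ordinal h0)) => [->|ne]; last by exists (Ordinal h0); rewrite eq_sym.
by exists (Ordinal h1); apply/eqP => /(congr1 val).
Qed.

Lemma margin_exact i : exists j, j != y i /\
  (forall j', j' != y i -> dotv (w j') (z i) <= dotv (w j) (z i)) /\
  sample_margin y w z i = (dotv (w (y i)) (z i) - dotv (w j) (z i))%:E.
Proof.
have [j0 hj0] := exists_other (y i).
have [j hj E] := @eq_bigmax _ _ _ (-oo)%E j0 (fun j => j != y i)
   (fun j => (dotv (w j) (z i))%:E) hj0 (fun _ _ => leNye _).
exists j; split => //; split; last by rewrite /sample_margin E EFinB.
move=> j' hj'.
have := @le_bigmax_cond _ _ _ (-oo)%E j' (fun j => j != y i)
   (fun j => (dotv (w j) (z i))%:E) hj'.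
by rewrite E lee_fin.
Qed.

Local Open Scope ereal_scope.
Lemma gamma_le i : gamma_min y w z <= sample_margin y w z i.
Proof. exact: (@bigmin_le_cond _ _ _ +oo i xpredT). Qed.

Lemma gamma_attain (i0 : 'I_N) : exists i, gamma_min y w z = sample_margin y w z i.
Proof.
have [i _ E] := @eq_bigmin _ _ _ (+oo)%E i0 xpredT (sample_margin y w z) isT (fun _ _ => leey _).
by exists i.
Qed.
Local Close Scope ereal_scope.

Definition qk : R := (k%:R - 1)^-1.
Definition Sw : 'rV[R]_d := \sum_j w j.

Lemma kr_gt1 : 1 < (k%:R : R).
Proof. by rewrite ltr1n. Qed.

Lemma margin_bound i : exists r : R, sample_margin y w z i = r%:E /\ r <= (1 + qk) * dotv (w (y i)) (z i) - qk * dotv Sw (z i).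
Proof.
have [j [hj [hmax E]]] := margin_exact i.
exists (dotv (w (y i)) (z i) - dotv (w j) (z i)); split => //.
set A := dotv (w (y i)) (z i); set F := fun j' => dotv (w j') (z i).
have hS : dotv Sw (z i) = A + \sum_(j' | j' != y i) F j'.
  by rewrite /Sw dotv_suml (bigD1 (y i)).
have hc : \sum_(j' | j' != y i) F j = (k%:R - 1) * F j.
  have := sumr_const (pred_of_simpl (@predT 'I_k)) (F j).
  rewrite (bigD1 (y i)) //= card_ord => h.
  have -> : \sum_(j' | j' != y i) F j = F j *+ k - F j by rewrite -h; ring.
  by rewrite -mulr_natl; ring.
have hle : \sum_(j' | j' != y i) F j' <= \sum_(j' | j' != y i) F j.
  by apply: ler_sum => j' hj'; exact: hmax.
have hk1 : 0 < (k%:R : R) - 1 by rewrite subr_gt0 kr_gt1.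
have hq : 0 < qk by rewrite /qk invr_gt0.
have key : qk * (dotv Sw (z i) - A) <= F j.
  rewrite hS addrAC subrr add0r.
  have -> : F j = qk * ((k%:R - 1) * F j) by rewrite mulrA mulVf ?mul1r // gt_eqF.
  by apply: ler_wpM2l; [exact: ltW | rewrite -hc; exact: hle].
rewrite /F in key; lra.
Qed.

Lemma sum_const_neq (c : 'I_k) (x : R) : \sum_(j | j != c) x = (k%:R - 1) * x.
Proof.
have := sumr_const (pred_of_simpl (@predT 'I_k)) x.
rewrite (bigD1 c) //= card_ord => h.
have -> : \sum_(j | j != c) x = x *+ k - x by rewrite -h; ring.
by rewrite -mulr_natl; ring.
Qed.

Lemma kqk : (k%:R - 1) * qk = 1.
Proof. by rewrite /qk mulfV // gt_eqF // subr_gt0 kr_gt1. Qed.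

Lemma qk_gt0 : 0 < qk.
Proof. by rewrite /qk invr_gt0 subr_gt0 kr_gt1. Qed.

Lemma kr_neq0 : (k%:R : R) != 0.
Proof. by rewrite pnatr_eq0 -lt0n; apply: leq_trans hk. Qed.

Lemma qk_k : (1 + qk) / k%:R = qk.
Proof.
rewrite /qk; have h1 : (k%:R : R) - 1 != 0 by rewrite gt_eqF // subr_gt0 kr_gt1.
have h2 := kr_neq0.
by field; rewrite h1 h2.
Qed.

Definition ac c : 'rV[R]_d := w c - (k%:R)^-1 *: Sw.

Lemma sum_ac (hw : forall j, dotv (w j) (w j) = 1) :
  \sum_c dotv (ac c) (ac c) = k%:R - dotv Sw Sw / k%:R.
Proof.
have E c : dotv (ac c) (ac c) =
   (1 + (k%:R)^-2 * dotv Sw Sw) - 2 * (k%:R)^-1 * dotv (w c) Sw.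
  rewrite /ac dotvBl !dotvBr !dotvZl !dotvZr hw (dotvC Sw (w c)).
  by rewrite expr2 invfM; ring.
have hsum : \sum_c dotv (w c) Sw = dotv Sw Sw by rewrite -dotv_suml.
rewrite (eq_bigr _ (fun c _ => E c)) sumrB -mulr_sumr hsum sumr_const card_ord.
have h2 := kr_neq0.
rewrite -mulr_natr.
by field.
Qed.

Hypothesis hw : forall j, dotv (w j) (w j) = 1.
Hypothesis hz : forall i, dotv (z i) (z i) = 1.
Hypothesis hy : forall c : 'I_k, exists i : 'I_N, y i = c.

Lemma per_class c g : (g%:E <= gamma_min y w z)%E ->
  g <= (1 + qk) * (dotv (ac c) (ac c) + 1) / 2.
Proof.
move=> H.
have [i hi] := hy c.
have [r [Er hr]] := margin_bound i.
have : (g%:E <= r%:E)%E by rewrite -Er; apply: le_trans H (gamma_le i).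
rewrite lee_fin => hgr.
have h1 : dotv (ac c) (z i) = dotv (w c) (z i) - (k%:R)^-1 * dotv Sw (z i).
  by rewrite /ac dotvBl dotvZl.
have h2 := two_dot_le (ac c) (z i); rewrite hz in h2.
rewrite hi in hr.
have h3 : (1 + qk) * dotv (w c) (z i) - qk * dotv Sw (z i) =
          (1 + qk) * dotv (ac c) (z i).
  by rewrite h1 mulrBr mulrA qk_k.
have q0 := qk_gt0.
have h4 : (1 + qk) * (2 * dotv (ac c) (z i)) <= (1 + qk) * (dotv (ac c) (ac c) + 1).
  by apply: ler_wpM2l => //; lra.
lra.
Qed.

Lemma main_ineq g : (g%:E <= gamma_min y w z)%E ->
  k%:R * g <= (1 + qk) * (2 * k%:R - dotv Sw Sw / k%:R) / 2.
Proof.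
move=> H.
have : \sum_(c < k) g <= \sum_(c < k) ((1 + qk) * (dotv (ac c) (ac c) + 1) / 2).
  by apply: ler_sum => c _; exact: per_class.
have -> : \sum_(c < k) ((1 + qk) * (dotv (ac c) (ac c) + 1) / 2) =
   (1 + qk) / 2 * \sum_(c < k) dotv (ac c) (ac c) + ((1 + qk) / 2) *+ k.
  have e c : (1 + qk) * (dotv (ac c) (ac c) + 1) / 2 =
     (1 + qk) / 2 * dotv (ac c) (ac c) + (1 + qk) / 2 by ring.
  by rewrite (eq_bigr _ (fun c _ => e c)) big_split /= -mulr_sumr sumr_const card_ord.
rewrite sum_ac // sumr_const card_ord -[g *+ k]mulr_natr -[_ / 2 *+ k]mulr_natr.
move=> h.
have e : (1 + qk) / 2 * (k%:R - dotv Sw Sw / k%:R) + (1 + qk) / 2 * k%:R =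
   (1 + qk) * (2 * k%:R - dotv Sw Sw / k%:R) / 2 by ring.
by rewrite -e mulrC.
Qed.


Lemma some_sample : exists i0 : 'I_N, true.
Proof. have [i0 _] := hy (Ordinal (ltnW hk)); by exists i0. Qed.

Lemma gamma_upper : (gamma_min y w z <= (1 + qk)%:E)%E.
Proof.
have [i0 _] := some_sample.
have [r [Er _]] := margin_bound i0.
have hgl := gamma_le i0.
case E: (gamma_min y w z) => [g| |]; [ | by move: hgl; rewrite E Er | by rewrite leNye].
have := main_ineq (g:=g); rewrite E => /(_ (le_refl _)) h.
rewrite lee_fin.
have hk0 : 0 < (k%:R : R) by rewrite ltr0n; apply: leq_trans hk.
have hq := qk_gt0.
have h5 : 0 <= (1 + qk) * (dotv Sw Sw / k%:R).
  by apply: mulr_ge0; [lra | apply: divr_ge0; [exact: dotv_ge0 | lra]].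
have h6 : k%:R * g <= k%:R * (1 + qk) by lra.
by rewrite ler_pM2l in h6.
Qed.


Lemma backward : (forall a b, a != b -> dotv (w a) (w b) = - qk) ->
  (forall i, z i = w (y i)) -> gamma_min y w z = (1 + qk)%:E.
Proof.
move=> hetf hzw.
have [i0 _] := some_sample.
have [i ->] := gamma_attain i0.
have [j [hj [_ Em]]] := margin_exact i.
rewrite Em hzw hw dotvC hetf; last by rewrite eq_sym.
by rewrite opprK.
Qed.

Hypothesis hmax : gamma_min y w z = (1 + qk)%:E.

Lemma Sw0 : Sw = 0.
Proof.
have := main_ineq (g:=1 + qk); rewrite hmax => /(_ (le_refl _)) h.
have hk0 : 0 < (k%:R : R) by rewrite ltr0n; apply: leq_trans hk.
have hq := qk_gt0.
have h7 : (1 + qk) * (dotv Sw Sw / k%:R) <= 0 by lra.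
rewrite pmulr_rle0 in h7; last by lra.
have h8 : 0 <= dotv Sw Sw / k%:R by apply: divr_ge0; [exact: dotv_ge0 | lra].
have : dotv Sw Sw / k%:R = 0 by apply/le_anti; rewrite h7 h8.
move/eqP; rewrite mulf_eq0 invr_eq0 (negbTE kr_neq0) orbF => /eqP.
exact: dotv_eq0.
Qed.

Lemma z_eq i : z i = w (y i).
Proof.
have [r [Er hr]] := margin_bound i.
have := gamma_le i; rewrite hmax Er lee_fin => h1.
rewrite Sw0 dotv0l mulr0 subr0 in hr.
have hq := qk_gt0.
have h2 : (1 + qk) * 1 <= (1 + qk) * dotv (w (y i)) (z i) by lra.
rewrite ler_pM2l in h2; last by lra.
have h3 := dist_sq (hw (y i)) (hz i).
have h4 := dotv_ge0 (w (y i) - z i).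
have : dotv (w (y i) - z i) (w (y i) - z i) = 0 by apply/le_anti; apply/andP; split; lra.
by move/dotv_eq0/subr0_eq.
Qed.

Lemma etf a b : a != b -> dotv (w a) (w b) = - qk.
Proof.
move=> hab.
have [i hi] := hy a.
have [j [hj [hmx Em]]] := margin_exact i.
have := gamma_le i; rewrite hmax Em z_eq hi hw lee_fin => h1.
set F := fun j' => dotv (w j') (w a).
have hle : forall j', j' != a -> F j' <= - qk.
  move=> j' hj'; have := hmx j'; rewrite hi z_eq hi => /(_ hj'); rewrite /F; lra.
have hS : dotv Sw (w a) = F a + \sum_(j' | j' != a) F j'.
  by rewrite /Sw dotv_suml (bigD1 a).
rewrite Sw0 dotv0l /F hw in hS.
have hG : \sum_(j' | j' != a) (- qk - F j') = 0.
  rewrite sumrB sum_const_neq mulrN kqk; rewrite /F; lra.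
have hpos : forall j', j' != a -> 0 <= - qk - F j'.
  by move=> j' hj'; have := hle j' hj'; lra.
have hba : b != a by rewrite eq_sym.
have := psumr_eq0P hpos hG (i:=b) hba.
rewrite /F dotvC; lra.
Qed.
End Margin.
Section Etf.
Variables (R : realType) (d k : nat).
Hypothesis hk : (2 <= k)%N.
Hypothesis hkd : (k <= d.+1)%N.

Definition nn := k.-1.
Lemma k_nn : k = nn.+1.
Proof. by rewrite /nn prednK //; apply: leq_trans hk. Qed.
Lemma nn_gt0 : (0 < nn)%N.
Proof. by move: hk; rewrite k_nn. Qed.
Lemma nn_le_d : (nn <= d)%N.
Proof. by move: hkd; rewrite k_nn. Qed.

Definition ee (c : nat) : 'rV[R]_d := \row_(i < d) ((i : nat) == c)%:R.
Definition UU : 'rV[R]_d := \sum_(j < nn) ee j.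

Lemma delta_sum m (c : nat) (g : nat -> R) : (c < m)%N ->
  \sum_(i < m) (((i : nat) == c)%:R * g i) = g c.
Proof.
move=> h; rewrite (bigD1 (Ordinal h)) //= eqxx mul1r big1 ?addr0 //.
move=> i hi; suff -> : ((i : nat) == c) = false by rewrite mul0r.
apply/negbTE; apply: contra hi => /eqP hc; apply/eqP/val_inj => /=; exact: hc.
Qed.

Lemma dot_ee c c' : (c < d)%N -> dotv (ee c) (ee c') = (c == c')%:R.
Proof.
move=> h; rewrite /dotv.
rewrite (eq_bigr (fun i : 'I_d => ((i : nat) == c)%:R * (((i : nat) == c')%:R : R))).
  by rewrite (delta_sum (fun i => ((i == c')%:R : R)) h).
by move=> i _; rewrite !mxE.
Qed.

Lemma dot_eU c : (c < nn)%N -> dotv (ee c) UU = 1.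
Proof.
move=> h; rewrite /UU dotv_sumr.
have hcd : (c < d)%N by apply: leq_trans h nn_le_d.
rewrite (eq_bigr (fun j : 'I_nn => ((j : nat) == c)%:R * (1 : R))).
  by rewrite (delta_sum (fun _ => (1 : R)) h).
by move=> j _; rewrite dot_ee // eq_sym mulr1.
Qed.

Lemma dot_UU : dotv UU UU = nn%:R.
Proof.
rewrite {1}/UU dotv_suml.
rewrite (eq_bigr (fun _ => (1 : R))); first by rewrite sumr_const card_ord.
by move=> j _; rewrite dot_eU.
Qed.

Definition gam : R := Num.sqrt (nn%:R) / nn%:R.
Definition ss : R := Num.sqrt (k%:R).
Definition aa : R := ss * gam.
Definition bb : R := - (1 + ss) * gam / nn%:R.

Definition wetf (c : 'I_k) : 'rV[R]_d :=
  if (c < nn)%N then aa *: ee c + bb *: UU else gam *: UU.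

Lemma nn_neq0 : (nn%:R : R) != 0.
Proof. by rewrite pnatr_eq0 -lt0n nn_gt0. Qed.

Lemma gam2 : gam ^+ 2 = (nn%:R)^-1.
Proof.
rewrite /gam expr_div_n sqr_sqrtr ?ler0n //.
by have := nn_neq0; move=> h; field.
Qed.

Lemma ss2 : ss ^+ 2 = nn%:R + 1.
Proof. by rewrite /ss sqr_sqrtr ?ler0n // {1}k_nn -natr1. Qed.

Lemma qk_nn : qk R k = (nn%:R)^-1.
Proof. by rewrite /qk {1}k_nn -natr1 addrK. Qed.

Lemma id1 : aa ^+ 2 + 2 * aa * bb + bb ^+ 2 * nn%:R = 1.
Proof.
have h := nn_neq0.
have -> : aa ^+ 2 + 2 * aa * bb + bb ^+ 2 * nn%:R =
  gam ^+ 2 * (ss ^+ 2 + (1 - ss ^+ 2) / nn%:R) by rewrite /aa /bb; field.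
by rewrite gam2 ss2; field.
Qed.

Lemma id2 : 2 * aa * bb + bb ^+ 2 * nn%:R = - (nn%:R)^-1.
Proof.
have h := nn_neq0.
have -> : 2 * aa * bb + bb ^+ 2 * nn%:R =
  gam ^+ 2 * (1 - ss ^+ 2) / nn%:R by rewrite /aa /bb; field.
by rewrite gam2 ss2; field.
Qed.

Lemma id3 : aa * gam + bb * gam * nn%:R = - (nn%:R)^-1.
Proof.
have h := nn_neq0.
have -> : aa * gam + bb * gam * nn%:R = - gam ^+ 2 by rewrite /aa /bb; field.
by rewrite gam2.
Qed.

Lemma id4 : gam ^+ 2 * nn%:R = 1.
Proof. by rewrite gam2 mulVf // nn_neq0. Qed.

Lemma dot_w1 (c c' : 'I_k) : (c < nn)%N -> (c' < nn)%N ->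
  dotv (wetf c) (wetf c') = aa ^+ 2 * ((c : nat) == c')%:R + 2 * aa * bb + bb ^+ 2 * nn%:R.
Proof.
move=> h h'; rewrite /wetf h h'.
have hcd : (c < d)%N by apply: leq_trans h nn_le_d.
have hcd' : (c' < d)%N by apply: leq_trans h' nn_le_d.
rewrite !dotvDl !dotvDr !dotvZl !dotvZr dot_ee // dot_eU // (dotvC UU) dot_eU //.
by rewrite dot_UU; ring.
Qed.

Lemma dot_w2 (c c' : 'I_k) : (c < nn)%N -> ~~ (c' < nn)%N ->
  dotv (wetf c) (wetf c') = aa * gam + bb * gam * nn%:R.
Proof.
move=> h h'; rewrite /wetf h (negbTE h').
rewrite !dotvDl !dotvZl !dotvZr dot_eU // dot_UU; ring.
Qed.

Lemma dot_w3 (c c' : 'I_k) : ~~ (c < nn)%N -> ~~ (c' < nn)%N ->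
  dotv (wetf c) (wetf c') = gam ^+ 2 * nn%:R.
Proof.
move=> h h'; rewrite /wetf (negbTE h) (negbTE h').
rewrite !dotvZl !dotvZr dot_UU; ring.
Qed.

Lemma notlt_eq (c c' : 'I_k) : ~~ (c < nn)%N -> ~~ (c' < nn)%N -> c = c'.
Proof.
move=> h h'; apply: val_inj => /=.
have hc : (c <= nn)%N by rewrite -ltnS -k_nn.
have hc' : (c' <= nn)%N by rewrite -ltnS -k_nn.
rewrite -leqNgt in h; rewrite -leqNgt in h'.
by apply/eqP; rewrite eqn_leq (leq_trans hc h') (leq_trans hc' h).
Qed.

Lemma etf_exists : exists w : 'I_k -> 'rV[R]_d,
  (forall j, dotv (w j) (w j) = 1) /\
  (forall a b, a != b -> dotv (w a) (w b) = - qk R k).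
Proof.
exists wetf; split.
  move=> j; case: (boolP (j < nn)%N) => h.
    by rewrite dot_w1 // eqxx mulr1 id1.
  by rewrite dot_w3 // id4.
move=> a b hab; rewrite qk_nn.
case: (boolP (a < nn)%N) => ha; case: (boolP (b < nn)%N) => hb.
- rewrite dot_w1 //.
  have -> : ((a : nat) == b) = false by apply/negbTE; exact: hab.
  by rewrite mulr0 add0r id2.
- by rewrite dot_w2 // id3.
- by rewrite dotvC dot_w2 // id3.
- by move: hab; rewrite (notlt_eq ha hb) eqxx.
Qed.
End Etf.

Theorem proposition1 (R : realType) (d k N : nat) (y : 'I_N -> 'I_k) :
  (2 <= d)%N -> (2 <= k)%N -> (k <= d.+1)%N ->
  (forall c : 'I_k, exists i : 'I_N, y i = c) ->
  (* upper bound *)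
  (forall (w : 'I_k -> 'rV[R]_d) (z : 'I_N -> 'rV[R]_d),
     (forall j, on_sphere (w j)) -> (forall i, on_sphere (z i)) ->
     (gamma_min y w z <= (k%:R / (k%:R - 1))%:E)%E) /\
  (* the bound is attained *)
  (exists (w : 'I_k -> 'rV[R]_d) (z : 'I_N -> 'rV[R]_d),
     (forall j, on_sphere (w j)) /\ (forall i, on_sphere (z i)) /\
     gamma_min y w z = (k%:R / (k%:R - 1))%:E) /\
  (* characterization of maximizers *)
  (forall (w : 'I_k -> 'rV[R]_d) (z : 'I_N -> 'rV[R]_d),
     (forall j, on_sphere (w j)) -> (forall i, on_sphere (z i)) ->
     (gamma_min y w z = (k%:R / (k%:R - 1))%:E <->
      ((forall i j : 'I_k, i != j -> dotv (w i) (w j) = - 1 / (k%:R - 1)) /\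
       (forall i : 'I_N, z i = w (y i))))).
Proof.
move=> hd hk hkd hy.
have hK : (k%:R : R) / (k%:R - 1) = 1 + qk R k.
  rewrite /qk; have h1 : (k%:R : R) - 1 != 0 by rewrite gt_eqF // subr_gt0 kr_gt1.
  by field.
have hq : - 1 / ((k%:R : R) - 1) = - qk R k by rewrite mulNr mul1r.
rewrite hK hq; split; [|split].
- by move=> w z hw hz; apply: (gamma_upper hk hw hz hy).
- have [w [hw hetf]] := etf_exists R hk hkd.
  exists w, (fun i => w (y i)); split; first by [].
  split; first by move=> i; exact: hw.
  by apply: (backward hk hw hy hetf).
- move=> w z hw hz; split.
    move=> hm; split; first exact: (etf hk hw hz hy hm).
    exact: (z_eq hk hw hz hy hm).
  by case=> h1 h2; apply: (backward hk hw hy h1 h2).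
Qed.
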